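(* Let $N\ge1$, let $K\ge1$ be real, and let $X\in M(N)$ be a non-zero matrix with Schatten height $\widetilde h(X)\le K$. Then there exists a non-zero orthogonal projection $P\in M(N)$ such that $$|\langle X,P\rangle_{\mathrm{HS}}|\ge \frac{1}{2\sqrt{4\log(2K)+2}}\|X\|_2\|P\|_2.$$
   Context: $M(N)$ is the space of $N\times N$ complex matrices with Hilbert–Schmidt inner product $\langle A,B\rangle_{\mathrm{HS}}=\operatorname{tr}(A^*B)$. $\|A\|_1,\|A\|_2$ are the trace and Hilbert–Schmidt (Schatten-1 and -2) norms and $\|A\|_\infty$ the operator norm. The Schatten height of a non-zero matrix is $\widetilde h(A)=\sqrt{\|A\|_1\|A\|_\infty}/\|A\|_2$. *)

(* Defs.v *)
From mathcomp Require Import all_boot all_order all_algebra spectral.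
From mathcomp Require Import complex.
From mathcomp Require Import reals exp.
Set Implicit Arguments. Unset Strict Implicit. Unset Printing Implicit Defensive.
Import Order.TTheory GRing.Theory Num.Theory.
Local Open Scope ring_scope.

Section Schatten.
Variable R : realType.
Local Notation C := R[i].

Definition adjmx N (A : 'M[C]_N) : 'M[C]_N := \matrix_(i, j) (A j i)^*.

Definition hsdot N (A B : 'M[C]_N) : C := \tr (adjmx A *m B).

(* singular values: square roots of the eigenvalues (with multiplicity) of
   A^* A, read off the diagonal of its spectral (Schur) decomposition. *)
Definition singval N (A : 'M[C]_N) (i : 'I_N) : R :=
  complex.Re (sqrtC (spectral_diag (adjmx A *m A) 0 i)).

Definition trnorm N (A : 'M[C]_N) : R := \sum_i singval A i.
Definition opnorm N (A : 'M[C]_N) : R := \big[Num.max/0]_i singval A i.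
Definition hsnorm N (A : 'M[C]_N) : R := Num.sqrt (complex.Re (\tr (adjmx A *m A))).

Definition schatten_height N (A : 'M[C]_N) : R :=
  Num.sqrt (trnorm A * opnorm A) / hsnorm A.

Definition orth_proj N (P : 'M[C]_N) : Prop := adjmx P = P /\ P *m P = P.

Definition cabs (z : C) : R := complex.Re `|z|.
End Schatten.

(* Main.v *)
Require Import Defs.
From mathcomp Require Import all_boot all_order all_algebra spectral.
From mathcomp Require Import complex.
From mathcomp Require Import reals exp ring lra.
From Stdlib Require Import Classical.
Set Implicit Arguments. Unset Strict Implicit. Unset Printing Implicit Defensive.
Import Order.TTheory GRing.Theory Num.Theory.
Local Open Scope ring_scope.

Lemma ln_bound (R : realType) (a v : R) : 0 < a -> a <= v -> 1 - a / v <= ln (v / a).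
Proof.
move=> a0 av; have v0 : 0 < v by apply: lt_le_trans av.
have h := @le_ln1Dx R (a / v - 1).
have : -1 < a / v - 1 by rewrite ltrBrDr addNr divr_gt0.
move/h; rewrite addrC subrK => H.
have -> : v / a = (a / v)^-1 by rewrite invf_div.
rewrite lnV ?posrE ?divr_gt0 //; lra.
Qed.

Lemma exists_min (R : realType) (I : finType) (x : I -> R) (U : {set I}) :
  U != set0 -> exists2 u, u \in U & forall j, j \in U -> x u <= x j.
Proof.
move=> /set0Pn [j0 j0U].
case: (@arg_minP _ _ I j0 (mem U) x j0U) => u uU hu.
by exists u.
Qed.

Lemma groupG (R : realType) (I : finType) (x : I -> R) (M b : R) :
  0 <= b ->
  forall (U : {set I}) (a : R), 0 < a -> a <= M ->
  (forall j, j \in U -> a <= x j <= M) ->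
  (forall J : {set I}, J \subset U -> \sum_(j in J) x j <= b * Num.sqrt (#|J|%:R)) ->
  \sum_(j in U) x j * (x j - a) <= b ^+ 2 * ln (M / a).
Proof.
move=> b0 U; have [n hn0] := ubnP #|U|; elim: n U hn0 => [//|n IH] U.
move=> hn a a0 aM hx hJ.
have lnMa : 0 <= ln (M / a).
  by apply: ln_ge0; rewrite ler_pdivlMr // mul1r.
have [->|Un0] := eqVneq U set0.
  by rewrite big_set0 mulr_ge0 // sqr_ge0.
have [u uU hu] := exists_min x Un0.
set v := x u.
have /andP [av vM] := hx u uU.
have v0 : 0 < v by apply: lt_le_trans av.
have e1 : \sum_(j in U) x j * (x j - a) =
   \sum_(j in U) x j * (x j - v) + (v - a) * \sum_(j in U) x j.
  rewrite mulr_sumr -big_split /=; apply: eq_bigr => j _; ring.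
have e2 : \sum_(j in U) x j * (x j - v) = \sum_(j in U :\ u) x j * (x j - v).
  rewrite (big_setD1 u uU) /= /v subrr mulr0 add0r //.
have IH1 : \sum_(j in U :\ u) x j * (x j - v) <= b ^+ 2 * ln (M / v).
  apply: IH => //.
  - by move: hn; rewrite (cardsD1 u U) uU add1n.
  - move=> j; rewrite in_setD1 => /andP [_ jU]; rewrite hu //=.
    by case/andP: (hx j jU).
  - move=> J JU; apply: hJ; apply: subset_trans JU _; exact: subsetDl.
set A := \sum_(j in U) x j.
have nA : v * #|U|%:R <= A.
  rewrite /A -sum1_card natr_sum mulr_sumr ler_sum // => j jU.
  by rewrite mulr1 hu.
have Ab : A <= b * Num.sqrt (#|U|%:R) by apply: hJ.
have n1 : 1 <= (#|U|%:R : R).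
  by rewrite ler1n card_gt0.
have A0 : 0 < A by apply: lt_le_trans nA; rewrite mulr_gt0 // (lt_le_trans ltr01 n1).
have sq : A ^+ 2 <= b ^+ 2 * #|U|%:R.
  have -> : b ^+ 2 * #|U|%:R = (b * Num.sqrt (#|U|%:R)) ^+ 2.
    by rewrite exprMn sqr_sqrtr // (le_trans ler01 n1).
  by rewrite lerXn2r // ?nnegrE ?(ltW A0) // (le_trans (ltW A0) Ab).
have vA : v * A <= b ^+ 2.
  have : v * A ^+ 2 <= b ^+ 2 * A.
    apply: (le_trans (y := v * (b ^+ 2 * #|U|%:R))); first by rewrite ler_wpM2l // ltW.
    nra.
  move=> H; rewrite -(ler_pM2r A0); nra.
have key : (v - a) * A <= b ^+ 2 * (1 - a / v).
  have -> : (v - a) * A = (1 - a / v) * (v * A).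
    by field; rewrite gt_eqF.
  rewrite mulrC ler_wpM2r //.
  by rewrite subr_ge0 ler_pdivrMr // mul1r.
have lnsplit : ln (M / a) = ln (M / v) + ln (v / a).
  rewrite -lnM ?posrE ?divr_gt0 // ?(lt_le_trans v0 vM) //.
  congr ln; field; rewrite !gt_eqF //.
rewrite e1 e2 lnsplit mulrDr lerD //.
apply: le_trans key _; rewrite ler_wpM2l ?sqr_ge0 //.
exact: ln_bound.
Qed.

Lemma pairG (R : realType) (I : finType) (mu : I -> R) (a M b : R) :
  0 < a -> a <= M -> 0 <= b -> (forall j, `|mu j| <= M) ->
  (forall J : {set I}, (forall j, j \in J -> a < mu j) ->
     \sum_(j in J) mu j <= b * Num.sqrt (#|J|%:R)) ->
  (forall J : {set I}, (forall j, j \in J -> a < - mu j) ->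
     \sum_(j in J) - mu j <= b * Num.sqrt (#|J|%:R)) ->
  \sum_j mu j ^+ 2 <= 2 * (b ^+ 2 * ln (M / a)) + a * \sum_j `|mu j|.
Proof.
move=> a0 aM b0 hM hP hN.
pose Up := [set j | a < mu j]; pose Um := [set j | a < - mu j].
have G1 := @groupG R I mu M b b0 Up a a0 aM.
have G2 := @groupG R I (fun j => - mu j) M b b0 Um a a0 aM.
have {G1} G1 : \sum_(j in Up) mu j * (mu j - a) <= b ^+ 2 * ln (M / a).
  apply: G1.
  - move=> j; rewrite inE => h; rewrite (ltW h) /=.
    exact: le_trans (ler_norm _) (hM j).
  - move=> J JU; apply: hP => j jJ.
    by have := subsetP JU j jJ; rewrite inE.
have {G2} G2 : \sum_(j in Um) - mu j * (- mu j - a) <= b ^+ 2 * ln (M / a).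
  apply: G2.
  - move=> j; rewrite inE => h; rewrite (ltW h) /=.
    by move: (hM j); rewrite ler_norml => /andP [? ?]; lra.
  - move=> J JU; apply: hN => j jJ.
    by have := subsetP JU j jJ; rewrite inE.
have pt : forall j, mu j ^+ 2 <=
   (if j \in Up then mu j * (mu j - a) else 0) +
   (if j \in Um then - mu j * (- mu j - a) else 0) + a * `|mu j|.
  move=> j; rewrite !inE.
  case: (ltrP a (mu j)) => h1.
    have h2 : ~~ (a < - mu j) by rewrite -leNgt; lra.
    rewrite (negbTE h2) ger0_norm; last lra.
    lra.
  case: (ltrP a (- mu j)) => h2.
    rewrite ler0_norm; last lra.
    lra.
  case: (lerP 0 (mu j)) => h3.
    rewrite ger0_norm //; nra.
  rewrite ltr0_norm //; nra.
apply: le_trans (ler_sum _ (fun j _ => pt j)) _.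
rewrite big_split big_split /= -!big_mkcond -mulr_sumr.
rewrite lerD2r mulr2n mulrDl mul1r.
exact: lerD.
Qed.

Lemma final_scalar (R : realType) (S T M K c b a : R) :
  0 < S -> 1 <= K -> 0 <= T -> 0 <= M -> T * M <= K ^+ 2 * S -> S <= M * T ->
  c = 1 / (2 * Num.sqrt (4 * ln (2 * K) + 2)) ->
  b = c * Num.sqrt S ->
  a = 2 * b ^+ 2 / T ->
  [/\ 0 < a, a <= M & ~ (S <= 4 * (b ^+ 2 * ln (M / a)) + 2 * a * T)].
Proof.
move=> S0 K1 T0 M0 TM SM hc hb ha.
set L := ln (2 * K).
have L0 : 0 < L by rewrite /L ln_gt0 //; lra.
set q := 4 * L + 2.
have q0 : 0 < q by rewrite /q; lra.
have c2 : c ^+ 2 = 1 / (4 * q).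
  have sq : Num.sqrt (4 * ln (2 * K) + 2) ^+ 2 = q by rewrite sqr_sqrtr // ltW.
  rewrite hc expr_div_n expr1n exprMn sq; congr (_ / _).
  by rewrite expr2; ring.
have b2 : b ^+ 2 = S / (4 * q) by rewrite hb exprMn c2 sqr_sqrtr ?(ltW S0) // div1r mulrC.
have MT0 : 0 < M * T by apply: lt_le_trans SM.
have T0' : 0 < T.
  by rewrite lt0r T0 andbT; apply/eqP => T0e; move: MT0; rewrite T0e mulr0 ltxx.
have M0' : 0 < M.
  by rewrite lt0r M0 andbT; apply/eqP => M0e; move: MT0; rewrite M0e mul0r ltxx.
have ae : a = S / (2 * q * T) by rewrite ha b2; field; rewrite !gt_eqF.
have a0 : 0 < a by rewrite ae divr_gt0 // !mulr_gt0.
have aM : a <= M.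
  rewrite ae ler_pdivrMr ?mulr_gt0 //.
  apply: (le_trans SM).
  have -> : M * (2 * q * T) = M * T + M * T * (2 * q - 1) by ring.
  rewrite lerDl mulr_ge0 // ?mulr_ge0 // ?ltW //; rewrite /q; lra.
split => // H.
have Ma : M / a <= K ^+ 2 * (2 * q).
  rewrite ae invf_div [M * _]mulrA ler_pdivrMr //.
  have -> : M * (2 * q * T) = (2 * q) * (T * M) by ring.
  have -> : K ^+ 2 * (2 * q) * S = (2 * q) * (K ^+ 2 * S) by ring.
  rewrite ler_wpM2l //; lra.
have lnMa : ln (M / a) <= 4 * L.
  have h1 : ln (M / a) <= ln (K ^+ 2 * (2 * q)).
    have pMa : 0 < M / a := divr_gt0 M0' a0.
    have pK : 0 < K ^+ 2 * (2 * q) by rewrite mulr_gt0 ?exprn_gt0 //; lra.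
    by rewrite ler_ln ?posrE.
  apply: (le_trans h1).
  have K0 : 0 < K by lra.
  have p2 : (0:R) < 2 by [].
  have eL : L = ln 2 + ln K by rewrite /L lnM ?posrE.
  have eK : ln (K ^+ 2) = ln K + ln K by rewrite expr2 lnM ?posrE.
  have e4 : ln (4 : R) = ln 2 + ln 2.
    by rewrite -lnM ?posrE //; congr ln; rewrite -natrM.
  have eq2 : 2 * q = 4 * (1 + 2 * L) by rewrite /q; ring.
  have p1 : 0 < 1 + 2 * L by lra.
  have e5 : ln (K ^+ 2 * (2 * q)) = ln (K ^+ 2) + ln 4 + ln (1 + 2 * L).
    rewrite eq2 lnM ?posrE ?exprn_gt0 ?mulr_gt0 // lnM ?posrE //; ring.
  have hl := @le_ln1Dx R (2 * L).
  have : -1 < 2 * L by lra.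
  move/hl => {}hl.
  rewrite e5 eK e4; lra.
have e2 : 2 * a * T = 4 * b ^+ 2.
  rewrite ae b2; field; rewrite !gt_eqF //.
rewrite e2 b2 in H.
have : S <= 4 * (S / (4 * q) * (4 * L)) + 4 * (S / (4 * q)).
  apply: (le_trans H); rewrite lerD2r ler_wpM2l // ler_wpM2l //.
  by rewrite divr_ge0 ?mulr_ge0 // ltW.
have -> : 4 * (S / (4 * q) * (4 * L)) + 4 * (S / (4 * q)) = S * ((4 * L + 1) / q).
  by field; rewrite gt_eqF.
have : (4 * L + 1) / q < 1 by rewrite ltr_pdivrMr // mul1r /q; lra.
move=> h1 h2.
have : S * ((4 * L + 1) / q) < S by rewrite -{2}(mulr1 S) ltr_pM2l.
lra.
Qed.

Local Open Scope sesquilinear_scope.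

Section Mx.
Variable R : realType.
Local Notation C := R[i].

Lemma adjmxE n (A : 'M[C]_n) : adjmx A = A ^t*.
Proof. by apply/matrixP => i j; rewrite !mxE. Qed.

Lemma trC_mul m n p (A : 'M[C]_(m, n)) (B : 'M[C]_(n, p)) :
  (A *m B) ^t* = B ^t* *m A ^t*.
Proof. by rewrite trmx_mul map_mxM. Qed.

Lemma unitary_l n (U : 'M[C]_n) : U \is unitarymx -> U ^t* *m U = 1%:M.
Proof. by move=> Uu; have := mulmxKtV 1%:M Uu erefl; rewrite mul1mx. Qed.

Lemma unitary_r n (U : 'M[C]_n) : U \is unitarymx -> U *m U ^t* = 1%:M.
Proof. by move/unitarymxP. Qed.

Lemma tCmul_diag m n (A : 'M[C]_(m, n)) j :
  (A ^t* *m A) j j = \sum_k `|A k j| ^+ 2.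
Proof.
rewrite mxE; apply: eq_bigr => k _; rewrite !mxE normCK mulrC.
by [].
Qed.

Lemma multC_diag m n (A : 'M[C]_(m, n)) i :
  (A *m A ^t*) i i = \sum_k `|A i k| ^+ 2.
Proof.
rewrite mxE; apply: eq_bigr => k _; rewrite !mxE normCK.
by [].
Qed.

Lemma conj_diag_entry m n (B : 'M[C]_(m, n)) (d : 'rV[C]_m) j :
  (B ^t* *m diag_mx d *m B) j j = \sum_i d 0 i * `|B i j| ^+ 2.
Proof.
rewrite mul_mx_diag mxE; apply: eq_bigr => k _; rewrite !mxE normCK.
ring.
Qed.

Lemma trace_mul_diag n (A : 'M[C]_n) (d : 'rV[C]_n) :
  \tr (A *m diag_mx d) = \sum_j A j j * d 0 j.
Proof. by rewrite /mxtrace; apply: eq_bigr => j _; rewrite mul_mx_diag mxE. Qed.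

Lemma spectral_eq n (A : 'M[C]_n) : A \is normalmx ->
  A = (spectralmx A) ^t* *m diag_mx (spectral_diag A) *m spectralmx A.
Proof.
move/orthomx_spectralP => {1}->.
by rewrite invmx_unitary // spectral_unitarymx.
Qed.

Lemma spectral_eq' n (A : 'M[C]_n) : A \is normalmx ->
  spectralmx A *m A *m (spectralmx A) ^t* = diag_mx (spectral_diag A).
Proof.
move=> /spectral_eq {2}->; have Uu := spectral_unitarymx A.
by rewrite !mulmxA (unitary_r Uu) mul1mx -mulmxA (unitary_r Uu) mulmx1.
Qed.


Definition ind n (J : {set 'I_n}) : 'rV[C]_n := \row_j ((j \in J)%:R).
Definition projJ n (U : 'M[C]_n) (J : {set 'I_n}) : 'M[C]_n :=
  U ^t* *m diag_mx (ind J) *m U.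

Lemma diag_ind_tC n (J : {set 'I_n}) : (diag_mx (ind J)) ^t* = diag_mx (ind J).
Proof.
rewrite tr_diag_mx map_diag_mx; congr diag_mx; apply/rowP => j.
by rewrite !mxE rmorph_nat.
Qed.

Lemma diag_ind_idem n (J : {set 'I_n}) :
  diag_mx (ind J) *m diag_mx (ind J) = diag_mx (ind J).
Proof.
rewrite mulmx_diag; congr diag_mx; apply/rowP => j; rewrite !mxE.
by case: (j \in J); rewrite ?mulr1 ?mulr0.
Qed.

Lemma projJ_adj n (U : 'M[C]_n) J : (projJ U J) ^t* = projJ U J.
Proof. by rewrite /projJ !trC_mul trmxCK diag_ind_tC mulmxA. Qed.

Lemma projJ_idem n (U : 'M[C]_n) J : U \is unitarymx ->
  projJ U J *m projJ U J = projJ U J.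
Proof.
move=> Uu; rewrite /projJ.
rewrite -!mulmxA [U *m (U ^t* *m _)]mulmxA (unitary_r Uu) mul1mx.
by rewrite [diag_mx _ *m (_ *m U)]mulmxA diag_ind_idem.
Qed.

Lemma trace_conj n (U : 'M[C]_n) (A : 'M[C]_n) : U \is unitarymx ->
  \tr (U ^t* *m A *m U) = \tr A.
Proof.
by move=> Uu; rewrite mxtrace_mulC mulmxA (unitary_r Uu) mul1mx.
Qed.

Lemma projJ_tr n (U : 'M[C]_n) J : U \is unitarymx ->
  \tr (projJ U J) = #|J|%:R.
Proof.
move=> Uu; rewrite /projJ trace_conj // /mxtrace.
rewrite (eq_bigr (fun j => (j \in J)%:R)); last by move=> j _; rewrite !mxE eqxx mulr1n.
rewrite -natr_sum -sum1_card [in RHS]big_mkcond /=; congr (_ %:R).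
Qed.

Lemma hsdot_projJ n (U : 'M[C]_n) (X : 'M[C]_n) J : U \is unitarymx ->
  hsdot X (projJ U J) = \sum_(j in J) ((U *m X *m U ^t*) j j)^*.
Proof.
move=> Uu; rewrite /hsdot adjmxE /projJ !mulmxA mxtrace_mulC !mulmxA.
have -> : U *m X ^t* *m U ^t* = (U *m X *m U ^t*) ^t*.
  by rewrite !trC_mul trmxCK mulmxA.
rewrite trace_mul_diag [RHS]big_mkcond /=; apply: eq_bigr => j _.
rewrite !mxE; case: (j \in J); by rewrite ?mulr1 ?mulr0.
Qed.


Lemma amgm (p q s : C) : 0 <= p -> 0 <= q -> 0 < s ->
  p * q <= (p ^+ 2 / s + s * q ^+ 2) / 2.
Proof.
move=> p0 q0 s0.
have sq : 0 <= (p - s * q) ^+ 2.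
  by rewrite -realEsqr realB ?ger0_real // mulr_ge0 // ltW.
rewrite -subr_ge0.
have -> : (p ^+ 2 / s + s * q ^+ 2) / 2 - p * q = (p - s * q) ^+ 2 / (2 * s).
  by field; rewrite gt_eqF.
by rewrite divr_ge0 // mulr_ge0 // ltW.
Qed.

Lemma amgm_sum (I : finType) (a b : I -> C) (s : C) : 0 < s ->
  \sum_i `|a i| * `|b i| <=
  ((\sum_i `|a i| ^+ 2) / s + s * (\sum_i `|b i| ^+ 2)) / 2.
Proof.
move=> s0.
have -> : ((\sum_i `|a i| ^+ 2) / s + s * (\sum_i `|b i| ^+ 2)) / 2 =
    \sum_i ((`|a i| ^+ 2 / s + s * `|b i| ^+ 2) / 2).
  by rewrite -big_distrl /= big_split /= -big_distrl -big_distrr.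
by apply: ler_sum => i _; exact: amgm.
Qed.

Section SV.
Variable n : nat.
Variable X : 'M[C]_n.
Let W := spectralmx (X ^t* *m X).
Let sg := spectral_diag (X ^t* *m X).
Let Y := X *m W ^t*.

Lemma XX_normal : X ^t* *m X \is normalmx.
Proof. by apply/normalmxP; rewrite trC_mul trmxCK. Qed.

Lemma W_unitary : W \is unitarymx.
Proof. exact: spectral_unitarymx. Qed.

Lemma YY : Y ^t* *m Y = diag_mx sg.
Proof.
rewrite /Y trC_mul trmxCK !mulmxA -(mulmxA W).
exact: (spectral_eq' XX_normal).
Qed.

Lemma XYW : X = Y *m W.
Proof. by rewrite /Y mulmxKtV // W_unitary. Qed.

Lemma sg_sum i : sg 0 i = \sum_k `|Y k i| ^+ 2.
Proof. by rewrite -tCmul_diag YY mxE eqxx mulr1n. Qed.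

Lemma sg_ge0 i : 0 <= sg 0 i.
Proof. by rewrite sg_sum sumr_ge0 // => k _; rewrite exprn_ge0. Qed.

Lemma tr_XX : \tr (X ^t* *m X) = \sum_i sg 0 i.
Proof.
rewrite (spectral_eq XX_normal) trace_conj ?W_unitary //.
by rewrite /mxtrace; apply: eq_bigr => i _; rewrite mxE eqxx mulr1n.
Qed.

Definition sC i := sqrtC (sg 0 i).

Lemma sC_ge0 i : 0 <= sC i.
Proof. by rewrite sqrtC_ge0 sg_ge0. Qed.

Lemma sC_sqr i : sC i ^+ 2 = sg 0 i.
Proof. exact: sqrtCK. Qed.

Lemma Tbound (U : 'M[C]_n) : U \is unitarymx ->
  \sum_j `|(U *m X *m U ^t*) j j| <= \sum_i sC i.
Proof.
move=> Uu.
set A := U *m Y; set Q := W *m U ^t*.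
have eZ : U *m X *m U ^t* = A *m Q by rewrite XYW /A /Q !mulmxA.
have hA : forall i, \sum_j `|A j i| ^+ 2 = sg 0 i.
  move=> i; rewrite -tCmul_diag /A trC_mul mulmxA -(mulmxA _ _ U).
  by rewrite (unitary_l Uu) mulmx1 YY mxE eqxx mulr1n.
have hQ : forall i, \sum_j `|Q i j| ^+ 2 = 1.
  move=> i; rewrite -multC_diag /Q trC_mul trmxCK mulmxA -(mulmxA W).
  by rewrite (unitary_l Uu) mulmx1 (unitary_r W_unitary) mxE eqxx.
rewrite eZ.
apply: (le_trans (y := \sum_j \sum_i `|A j i| * `|Q i j|)).
  apply: ler_sum => j _; rewrite mxE.
  apply: le_trans (ler_norm_sum _ _ _) _.
  by apply: ler_sum => i _; rewrite normrM.
rewrite exchange_big /=; apply: ler_sum => i _.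
have [s0|s0] := eqVneq (sC i) 0.
  have sg0 : sg 0 i = 0 by rewrite -sC_sqr s0 expr0n.
  rewrite s0 big1 // => j _.
  have : `|A j i| ^+ 2 = 0.
    apply: (psumr_eq0P (P := predT) (F := fun j => `|A j i| ^+ 2)) => //.
      by move=> k _; rewrite exprn_ge0.
    by rewrite hA.
  by move/eqP; rewrite expf_eq0 /= => /eqP ->; rewrite mul0r.
have sp : 0 < sC i by rewrite lt0r s0 sC_ge0.
apply: le_trans (amgm_sum (fun j => A j i) (fun j => Q i j) sp) _.
rewrite hA hQ -sC_sqr mulr1.
rewrite le_eqVlt; apply/orP; left; apply/eqP; field.
by rewrite gt_eqF.
Qed.

Lemma Mbound (U : 'M[C]_n) (M : C) : U \is unitarymx -> 0 < M ->
  (forall i, sC i <= M) -> forall j, `|(U *m X *m U ^t*) j j| <= M.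
Proof.
move=> Uu M0 hM j.
set B := X *m U ^t*; set Q := W *m U ^t*.
have eZ : U *m X *m U ^t* = U *m B by rewrite /B mulmxA.
have hU : \sum_k `|U j k| ^+ 2 = 1.
  by rewrite -multC_diag (unitary_r Uu) mxE eqxx.
have hQ : \sum_i `|Q i j| ^+ 2 = 1.
  rewrite -tCmul_diag /Q trC_mul trmxCK mulmxA -(mulmxA U).
  by rewrite (unitary_l W_unitary) mulmx1 (unitary_r Uu) mxE eqxx.
have hB : \sum_k `|B k j| ^+ 2 <= M ^+ 2.
  rewrite -tCmul_diag /B trC_mul trmxCK !mulmxA -(mulmxA U (X ^t*) X) (spectral_eq XX_normal) -/W -/sg.
  have -> : U *m (W ^t* *m diag_mx sg *m W) *m U ^t* =
            Q ^t* *m diag_mx sg *m Q.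
    by rewrite /Q !trC_mul trmxCK !mulmxA.
  rewrite conj_diag_entry.
  apply: (le_trans (y := \sum_i M ^+ 2 * `|Q i j| ^+ 2)).
    apply: ler_sum => i _; apply: ler_wpM2r; first by rewrite exprn_ge0.
    by rewrite -sC_sqr !expr2 ler_pM ?sC_ge0.
  by rewrite -mulr_sumr hQ mulr1.
rewrite eZ mxE.
apply: le_trans (ler_norm_sum _ _ _) _.
apply: (le_trans (y := \sum_k `|B k j| * `|U j k|)).
  by apply: ler_sum => k _; rewrite normrM mulrC.
apply: le_trans (amgm_sum (fun k => B k j) (fun k => U j k) M0) _.
rewrite hU mulr1.
apply: (le_trans (y := (M ^+ 2 / M + M) / 2)).
  rewrite ler_pM2r ?invr_gt0 // lerD2r ler_pM2r ?invr_gt0 //.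
have -> : (M ^+ 2 / M + M) / 2 = M by field; rewrite gt_eqF.
by [].
Qed.

End SV.

Lemma trC_scale m n' (a : C) (A : 'M[C]_(m, n')) : (a *: A) ^t* = a^* *: A ^t*.
Proof. by apply/matrixP => i j; rewrite !mxE rmorphM. Qed.

Lemma trC_add m n' (A B : 'M[C]_(m, n')) : (A + B) ^t* = A ^t* + B ^t*.
Proof. by apply/matrixP => i j; rewrite !mxE rmorphD. Qed.

Lemma trC_opp m n' (A : 'M[C]_(m, n')) : (- A) ^t* = - A ^t*.
Proof. by apply/matrixP => i j; rewrite !mxE rmorphN. Qed.

Lemma trace_mul_normal n (A : 'M[C]_n) : A \is normalmx ->
  \tr (A *m A) = \sum_j (spectral_diag A 0 j) ^+ 2.
Proof.
move=> An; have Uu := spectral_unitarymx A.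
rewrite {1 2}(spectral_eq An) -!mulmxA [spectralmx A *m _]mulmxA.
rewrite [spectralmx A *m _ *m _]mulmxA (unitary_r Uu) mul1mx !mulmxA.
rewrite -(mulmxA (spectralmx A ^t*)) trace_conj // trace_mul_diag; apply: eq_bigr => j _.
by rewrite mxE eqxx mulr1n expr2.
Qed.

Lemma herm_normal n (A : 'M[C]_n) : A ^t* = A -> A \is normalmx.
Proof. by move=> h; apply/normalmxP; rewrite h. Qed.

Lemma spectral_entry n (A : 'M[C]_n) j : A \is normalmx ->
  spectral_diag A 0 j = (spectralmx A *m A *m (spectralmx A) ^t*) j j.
Proof. by move=> An; rewrite (spectral_eq' An) mxE eqxx mulr1n. Qed.

Section HK.
Variable n : nat.
Variable X : 'M[C]_n.

Definition Hm := 2^-1 *: (X + X ^t*).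
Definition Km := (- 'i / 2) *: (X - X ^t*).

Lemma two_neq0 : (2 : C) != 0.
Proof. by rewrite pnatr_eq0. Qed.

Lemma Hm_herm : Hm ^t* = Hm.
Proof.
rewrite /Hm trC_scale trC_add trmxCK addrC; congr (_ *: _).
by apply: conj_Creal; rewrite realV realn.
Qed.

Lemma Km_herm : Km ^t* = Km.
Proof.
rewrite /Km trC_scale trC_add trC_opp trmxCK.
have e : (- 'i / 2 : C)^* = 'i / 2.
  have -> : (- 'i / 2 : C) = 0 + 'i * (- 2^-1) by rewrite add0r mulrN mulNr.
  rewrite conjC_rect ?rpred0 ?rpredN ?realV ?realn //.
  by rewrite sub0r mulrN opprK.
by rewrite e mulNr scaleNr -scalerN opprB.
Qed.

Lemma conj_mid (U : 'M[C]_n) (A : 'M[C]_n) :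
  U *m A ^t* *m U ^t* = (U *m A *m U ^t*) ^t*.
Proof. by rewrite !trC_mul trmxCK mulmxA. Qed.

Lemma diag_H (U : 'M[C]_n) j :
  (U *m Hm *m U ^t*) j j = ((complex.Re ((U *m X *m U ^t*) j j))%:C)%C.
Proof.
rewrite /Hm -scalemxAr -scalemxAl mulmxDr mulmxDl conj_mid.
rewrite !mxE addcJ mulrA mulVf ?two_neq0 ?mul1r //.
Qed.

Lemma diag_K (U : 'M[C]_n) j :
  (U *m Km *m U ^t*) j j = ((complex.Im ((U *m X *m U ^t*) j j))%:C)%C.
Proof.
rewrite /Km -scalemxAr -scalemxAl mulmxBr mulmxBl conj_mid.
rewrite !mxE subcJ.
set y := ((complex.Im _)%:C)%C.
have hi : ('i%C : C) = 'i by [].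
rewrite hi.
have -> : - 'i / 2 * (2%:R * y * 'i) = - ('i ^+ 2) * y :> C.
  by rewrite expr2; field.
by rewrite sqrCi opprK mul1r.
Qed.

Lemma trace_HK : \tr (Hm *m Hm) + \tr (Km *m Km) = \tr (X ^t* *m X).
Proof.
set k : C := - 'i / 2.
have eH : Hm *m Hm = (2^-1 * 2^-1) *:
   (X *m X + X *m X ^t* + (X ^t* *m X + X ^t* *m X ^t*)).
  by rewrite /Hm -scalemxAl -scalemxAr scalerA mulmxDl !mulmxDr addrA.
have eK : Km *m Km = (k * k) *:
   (X *m X - X *m X ^t* - (X ^t* *m X - X ^t* *m X ^t*)).
  by rewrite /Km -/k -scalemxAl -scalemxAr scalerA mulmxBl !mulmxBr.
rewrite eH eK !mxtraceZ !raddfB /= !raddfD /=.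
rewrite (mxtrace_mulC X (X ^t*)).
have kk : k * k = - (2^-1 * 2^-1).
  by rewrite /k -expr2 expr_div_n sqrrN sqrCi; field.
by rewrite kk; field.
Qed.

End HK.

Lemma normE (z : C) : `|z| = ((cabs z)%:C)%C.
Proof. by rewrite /cabs RRe_real // ger0_real. Qed.

Lemma cabs_ge0 (z : C) : 0 <= cabs z.
Proof. by rewrite -ler0c -normE. Qed.

Lemma Re_le_cabs (z : C) : `|complex.Re z| <= cabs z.
Proof. by rewrite -lecR -normE; apply: normc_ge_Re. Qed.

Lemma Im_le_cabs (z : C) : `|complex.Im z| <= cabs z.
Proof.
have -> : complex.Im z = - complex.Re (z * 'i%C) by rewrite ReiNIm opprK.
rewrite normrN; apply: le_trans (Re_le_cabs _) _.
rewrite -lecR -!normE normrM.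
have -> : `|('i%C : C)| = 1 by apply: normCi.
by rewrite mulr1.
Qed.

Lemma ReD (x y : C) : complex.Re (x + y) = complex.Re x + complex.Re y.
Proof. by case: x => a b; case: y. Qed.

Lemma ImD (x y : C) : complex.Im (x + y) = complex.Im x + complex.Im y.
Proof. by case: x => a b; case: y. Qed.

Lemma Re_sum (I : finType) (P : pred I) (F : I -> C) :
  complex.Re (\sum_(i | P i) F i) = \sum_(i | P i) complex.Re (F i).
Proof. by apply: (big_morph _ ReD). Qed.

Lemma Im_sum (I : finType) (P : pred I) (F : I -> C) :
  complex.Im (\sum_(i | P i) F i) = \sum_(i | P i) complex.Im (F i).
Proof. by apply: (big_morph _ ImD). Qed.

Lemma Re_conj (z : C) : complex.Re (z^*) = complex.Re z.
Proof. by case: z. Qed.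

Lemma Im_conj (z : C) : complex.Im (z^*) = - complex.Im z.
Proof. by case: z. Qed.

Lemma rc_sum (I : finType) (F : I -> R) :
  ((\sum_i F i)%:C)%C = \sum_i ((F i)%:C)%C :> C.
Proof. by rewrite rmorph_sum. Qed.

Lemma tr_pos n (X : 'M[C]_n) : X != 0 -> 0 < complex.Re (\tr (X ^t* *m X)).
Proof.
move=> X0.
have e : \tr (X ^t* *m X) = \sum_j \sum_k `|X k j| ^+ 2.
  by apply: eq_bigr => j _; rewrite tCmul_diag.
have v0 : 0 <= \tr (X ^t* *m X).
  by rewrite e sumr_ge0 // => j _; rewrite sumr_ge0 // => k _; rewrite exprn_ge0.
have ve : \tr (X ^t* *m X) = ((complex.Re (\tr (X ^t* *m X)))%:C)%C.
  by rewrite RRe_real // ger0_real.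
have : 0 <= complex.Re (\tr (X ^t* *m X)) by rewrite -ler0c -ve.
rewrite le_eqVlt => /orP [/eqP h|//].
exfalso; move/negP: X0; apply; apply/eqP/matrixP => k j; rewrite mxE.
have h0 : \tr (X ^t* *m X) = 0 by rewrite ve -h.
have : \sum_k `|X k j| ^+ 2 = 0.
  apply: (psumr_eq0P (P := predT) (F := fun j => \sum_k `|X k j| ^+ 2)) => //.
    by move=> i _; rewrite sumr_ge0 // => l _; rewrite exprn_ge0.
  by rewrite -e.
move=> h1.
have : `|X k j| ^+ 2 = 0.
  apply: (psumr_eq0P (P := predT) (F := fun k => `|X k j| ^+ 2)) => //.
  by move=> l _; rewrite exprn_ge0.
by move/eqP; rewrite expf_eq0 /= normr_eq0 => /eqP.
Qed.

End Mx.

Lemma rc_exp2 (R : realType) (x : R) : ((x ^+ 2)%:C)%C = ((x%:C)%C) ^+ 2 :> R[i].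
Proof. exact: rmorphXn. Qed.

Lemma Re_nat (R : realType) (n : nat) : complex.Re (n%:R : R[i]) = n%:R.
Proof. by rewrite -(rmorph_nat (real_complex R) n). Qed.

Theorem lemma4p3 (R : realType) (N : nat) (K : R) (X : 'M[R[i]]_N) :
  (1 <= N)%N -> 1 <= K -> X != 0 -> schatten_height X <= K ->
  exists P : 'M[R[i]]_N,
    [/\ P != 0, orth_proj P &
      cabs (hsdot X P) >=
        1 / (2 * Num.sqrt (4 * ln (2 * K) + 2)) * hsnorm X * hsnorm P].
Proof.
move=> N1 K1 X0 hK.
set c := 1 / (2 * Num.sqrt (4 * ln (2 * K) + 2)).
pose s i := singval X i.
have sE : forall i, ((s i)%:C)%C = sC X i.
  move=> i; rewrite /s /singval adjmxE RRe_real //.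
  by apply: ger0_real; apply: sC_ge0.
have s0 : forall i, 0 <= s i by move=> i; rewrite -ler0c sE sC_ge0.
set T := trnorm X; set M := opnorm X.
set S := complex.Re (\tr (adjmx X *m X)).
have SE : S = \sum_i s i ^+ 2.
  rewrite /S adjmxE tr_XX.
  have -> : \sum_i spectral_diag (X ^t* *m X) 0 i = ((\sum_i s i ^+ 2)%:C)%C.
    rewrite rc_sum; apply: eq_bigr => i _.
    by rewrite rc_exp2 sE sC_sqr.
  by [].
have hsX : hsnorm X = Num.sqrt S by [].
have T0 : 0 <= T by rewrite /T /trnorm sumr_ge0.
have sM : forall i, s i <= M by move=> i; rewrite /M /opnorm; apply: le_bigmax.
have M0 : 0 <= M by apply: le_trans (s0 (Ordinal N1)) (sM _).
have S0 : 0 < S by rewrite /S adjmxE tr_pos.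
have TM : T * M <= K ^+ 2 * S.
  have sqS : 0 < Num.sqrt S by rewrite sqrtr_gt0.
  move: hK; rewrite /schatten_height -/T -/M hsX ler_pdivrMr //.
  move=> h.
  have hTM : 0 <= T * M by rewrite mulr_ge0.
  rewrite -(sqr_sqrtr hTM) -(sqr_sqrtr (ltW S0)) -exprMn.
  by rewrite lerXn2r ?nnegrE ?sqrtr_ge0 // mulr_ge0 // ?sqrtr_ge0 //; lra.
have SMT : S <= M * T.
  rewrite SE /T /trnorm mulr_sumr; apply: ler_sum => i _.
  by rewrite expr2 ler_wpM2r.
pose b := c * Num.sqrt S.
pose a := 2 * b ^+ 2 / T.
have [a0 aM nH] := final_scalar S0 K1 T0 M0 TM SMT (erefl c) (erefl b) (erefl a).
have b0 : 0 <= b by rewrite /b mulr_ge0 ?sqrtr_ge0 // /c divr_ge0 // mulr_ge0 // sqrtr_ge0.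
have Mpos : 0 < M.
  rewrite lt0r M0 andbT; apply/eqP => Me.
  by move: (lt_le_trans S0 SMT); rewrite Me mul0r ltxx.
apply: NNPP => Hno.
have hP : forall (U : 'M[R[i]]_N) (J : {set 'I_N}), U \is unitarymx ->
    cabs (hsdot X (projJ U J)) <= b * Num.sqrt (#|J|%:R).
  move=> U J Uu.
  have [->|J0] := eqVneq J set0.
    rewrite hsdot_projJ // big_set0 cards0 sqrtr0 mulr0.
    by rewrite /cabs normr0.
  have hsP : hsnorm (projJ U J) = Num.sqrt (#|J|%:R).
    rewrite /hsnorm adjmxE projJ_adj projJ_idem // projJ_tr //.
    by rewrite Re_nat.
  have Pn0 : projJ U J != 0.
    apply/eqP => P0; move: (projJ_tr J Uu); rewrite P0 mxtrace0 => /eqP.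
    by rewrite eq_sym pnatr_eq0 cards_eq0 (negbTE J0).
  have orth : orth_proj (projJ U J).
    by split; [rewrite adjmxE projJ_adj | rewrite projJ_idem].
  have nle : ~ (c * hsnorm X * hsnorm (projJ U J) <= cabs (hsdot X (projJ U J))).
    by move=> h; apply: Hno; exists (projJ U J); split.
  move/negP: nle; rewrite -ltNge hsP hsX -/b => h; exact: ltW.
have part : forall (U : 'M[R[i]]_N) (g : R[i] -> R) (x : 'I_N -> R),
    U \is unitarymx ->
    (forall w, `|g w| <= cabs w) ->
    (forall J : {set 'I_N}, g (hsdot X (projJ U J)) = \sum_(j in J) x j) ->
    (forall j, `|x j| <= M) ->
    \sum_j x j ^+ 2 <= 2 * (b ^+ 2 * ln (M / a)) + a * \sum_j `|x j|.
  move=> U g x Uu hg hJ hx.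
  apply: (pairG a0 aM b0 hx) => J _.
    rewrite -hJ; apply: le_trans (ler_norm _) _; apply: le_trans (hg _) _.
    exact: hP.
  rewrite sumrN -hJ; apply: le_trans (ler_norm _) _; rewrite normrN.
  apply: le_trans (hg _) _; exact: hP.
have cM : forall (U : 'M[R[i]]_N) j, U \is unitarymx ->
    cabs ((U *m X *m U ^t*) j j) <= M.
  move=> U j Uu; rewrite -lecR -normE; apply: Mbound => //.
    by rewrite ltcR.
  by move=> i; rewrite -sE lecR.
have cT : forall (U : 'M[R[i]]_N), U \is unitarymx ->
    \sum_j cabs ((U *m X *m U ^t*) j j) <= T.
  move=> U Uu; rewrite -lecR rc_sum.
  have -> : ((T%:C)%C : R[i]) = \sum_i sC X i.
    by rewrite /T /trnorm rc_sum; apply: eq_bigr => i _; rewrite -sE.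
  rewrite (eq_bigr (fun j => `|(U *m X *m U ^t*) j j|)); last by move=> j _; rewrite normE.
  exact: Tbound.
pose U := spectralmx (Hm X).
have Uu : U \is unitarymx by exact: spectral_unitarymx.
pose x j := complex.Re ((U *m X *m U ^t*) j j).
have Hx : \sum_j x j ^+ 2 <= 2 * (b ^+ 2 * ln (M / a)) + a * \sum_j `|x j|.
  apply: (part U (fun w => complex.Re w)) => //.
  - by move=> w; exact: Re_le_cabs.
  - move=> J; rewrite hsdot_projJ // Re_sum; apply: eq_bigr => j _.
    by rewrite /x; case: ((U *m X *m U ^t*) j j).
  - by move=> j; apply: le_trans (Re_le_cabs _) (cM _ _ Uu).
have Hx1 : \sum_j `|x j| <= T.
  apply: le_trans (cT _ Uu); apply: ler_sum => j _; exact: Re_le_cabs.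
have Hx2 : complex.Re (\tr (Hm X *m Hm X)) = \sum_j x j ^+ 2.
  have Hn := herm_normal (Hm_herm X).
  rewrite trace_mul_normal //.
  have -> : \sum_j spectral_diag (Hm X) 0 j ^+ 2 = ((\sum_j x j ^+ 2)%:C)%C.
    rewrite rc_sum; apply: eq_bigr => j _.
    by rewrite spectral_entry // diag_H rc_exp2.
  by [].
pose V := spectralmx (Km X).
have Vu : V \is unitarymx by exact: spectral_unitarymx.
pose y j := complex.Im ((V *m X *m V ^t*) j j).
have Ky : \sum_j y j ^+ 2 <= 2 * (b ^+ 2 * ln (M / a)) + a * \sum_j `|y j|.
  apply: (part V (fun w => - complex.Im w)) => //.
  - by move=> w; rewrite normrN; exact: Im_le_cabs.
  - move=> J; rewrite hsdot_projJ // Im_sum -sumrN; apply: eq_bigr => j _.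
    by rewrite /y; case: ((V *m X *m V ^t*) j j) => p q /=; rewrite opprK.
  - by move=> j; apply: le_trans (Im_le_cabs _) (cM _ _ Vu).
have Ky1 : \sum_j `|y j| <= T.
  apply: le_trans (cT _ Vu); apply: ler_sum => j _; exact: Im_le_cabs.
have Ky2 : complex.Re (\tr (Km X *m Km X)) = \sum_j y j ^+ 2.
  have Kn := herm_normal (Km_herm X).
  rewrite trace_mul_normal //.
  have -> : \sum_j spectral_diag (Km X) 0 j ^+ 2 = ((\sum_j y j ^+ 2)%:C)%C.
    rewrite rc_sum; apply: eq_bigr => j _.
    by rewrite spectral_entry // diag_K rc_exp2.
  by [].
have SS : S = \sum_j x j ^+ 2 + \sum_j y j ^+ 2.
  by rewrite -Hx2 -Ky2 -ReD trace_HK /S adjmxE.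
apply: nH; rewrite SS.
have h1 : a * \sum_j `|x j| <= a * T by rewrite ler_wpM2l // ltW.
have h2 : a * \sum_j `|y j| <= a * T by rewrite ler_wpM2l // ltW.
lra.
Qed.
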